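(* Let $n\ge 2$ (in particular $n\ge3$), let $0<\varepsilon<1$ and let $K_{\varepsilon}$ be the body of revolution about the $x_n$-axis in $\mathbb{R}^n$ whose radial function is $\rho_{K_\varepsilon}(\phi)=(1+\varepsilon\cos^3\phi)^{-1/3}$, where $0\le\phi\le\pi$ is the angle with the positive $x_n$-axis; equivalently $\rho_{K_\varepsilon}(x)=(|x|^3+\varepsilon x_n^3)^{-1/3}$ for $x=(x_1,\dots,x_n)\in\mathbb{R}^n\setminus\{o\}$. Then $\rho_{K_\varepsilon}\in C^\infty(S^{n-1})$, the body $K_\varepsilon$ is not centrally symmetric, and there is a positive $\varepsilon_0\le 1$ such that $K_\varepsilon$ is convex for all $0<\varepsilon<\varepsilon_0$.
   Context: For a body $K$ star-shaped with respect to the origin and containing it in its interior, the radial function is $\rho_K(x)=\max\{c\in\mathbb{R}: cx\in K\}$, $x\ne o$ (homogeneous of degree $-1$); the body is determined by $\rho_K$ on $S^{n-1}$ via $K=\{x: x=o \text{ or } \rho_K(x)\ge 1\}$. A set is centrally symmetric if it is a translate of a set $X$ with $X=-X$. *)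

(* Defs.v *)
From HB Require Import structures.
From mathcomp Require Import all_boot all_order all_algebra.
From mathcomp Require Import all_classical all_reals all_analysis.
Set Implicit Arguments. Unset Strict Implicit. Unset Printing Implicit Defensive.
Import Order.TTheory GRing.Theory Num.Theory.
Import numFieldNormedType.Exports.
Local Open Scope classical_set_scope.
Local Open Scope ring_scope.

Section Defs.
Variables (R : realType) (n : nat).
Notation V := 'rV[R]_n.

Definition enorm (x : V) : R := Num.sqrt (\sum_(i < n) x 0 i ^+ 2).

Definition sphere : set V := [set x | enorm x = 1].

Definition evec (i : 'I_n) : V := delta_mx 0 i.

Definition partial (i : 'I_n) (f : V -> R) : V -> R :=
  fun x => 'D_(evec i) f x.

Definition iter_partial (s : seq 'I_n) (f : V -> R) : V -> R :=
  foldr partial f s.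

Definition smooth_on (U : set V) (f : V -> R) : Prop :=
  open U /\
  (forall (s : seq 'I_n) (i : 'I_n) (x : V), U x ->
      derivable (iter_partial s f) x (evec i)) /\
  (forall (s : seq 'I_n) (x : V), U x ->
      {for x, continuous (iter_partial s f)}).

Definition smooth_on_sphere (f : V -> R) : Prop :=
  exists (U : set V) (g : V -> R),
    sphere `<=` U /\ smooth_on U g /\ (forall x, sphere x -> g x = f x).

Definition body_of_radial (rho : V -> R) : set V :=
  [set x | x = 0 \/ 1 <= rho x].

Definition centrally_symmetric (K : set V) : Prop :=
  exists (t : V) (X : set V),
    (forall y, X y <-> X (- y)) /\ K = [set t + y | y in X].

Definition convex (K : set V) : Prop :=
  forall x y (t : R), K x -> K y -> 0 <= t -> t <= 1 ->
    K ((1 - t) *: x + t *: y).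

Definition rho_eps (j : 'I_n) (eps : R) (x : V) : R :=
  powR (enorm x ^+ 3 + eps * x 0 j ^+ 3) (- (1 / 3)).

Definition K_eps (j : 'I_n) (eps : R) : set V :=
  body_of_radial (rho_eps j eps).

End Defs.

(* Main.v *)
Require Import Defs.
From HB Require Import structures.
From mathcomp Require Import all_boot all_order all_algebra.
From mathcomp Require Import all_classical all_reals all_analysis.
From mathcomp Require Import ring lra.
Import Order.TTheory GRing.Theory Num.Theory.
Import numFieldNormedType.Exports.
Local Open Scope classical_set_scope.
Local Open Scope ring_scope.

Lemma unimod (R : realFieldType) (k s nu mu C : R) :
  0 <= k -> 0 <= nu -> nu <= s -> s <= mu ->
  0 <= C + k * nu^+2 - nu^+3 -> 0 <= C + k * mu^+2 - mu^+3 ->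
  0 <= C + k * s^+2 - s^+3.
Proof.
move=> k0 n0 ns sm Gn Gm.
have e1 : C + k * s^+2 - s^+3 - (C + k * nu^+2 - nu^+3) = (s - nu) * (k*(s+nu) - (s^+2 + s*nu + nu^+2)) by ring.
have e2 : C + k * mu^+2 - mu^+3 - (C + k * s^+2 - s^+3) = (mu - s) * (k*(mu+s) - (mu^+2 + mu*s + s^+2)) by ring.
have [h|h] := leP (s^+2 + s*nu + nu^+2) (k*(s+nu)).
  have : 0 <= (s - nu) * (k*(s+nu) - (s^+2 + s*nu + nu^+2)) by apply: mulr_ge0; lra.
  lra.
have sp : 0 < s + nu by nra.
have h3 : (s^+2 + s*nu + nu^+2)*(mu+s) <= (mu^+2 + mu*s + s^+2)*(s+nu).
  have e3 : (mu^+2 + mu*s + s^+2)*(s+nu) - (s^+2 + s*nu + nu^+2)*(mu+s) = s*(mu^+2 - nu^+2) + mu*nu*(mu-nu) by ring.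
  have : 0 <= s*(mu^+2 - nu^+2) + mu*nu*(mu-nu).
    apply: addr_ge0; apply: mulr_ge0; nra.
  lra.
have h4 : k * (mu + s) <= mu^+2 + mu*s + s^+2.
  have : k * (mu + s) * (s + nu) <= (mu^+2 + mu*s + s^+2)*(s+nu) by nra.
  move=> hh; rewrite -(ler_pM2r sp); lra.
have : 0 <= (mu - s) * ((mu^+2 + mu*s + s^+2) - k*(mu+s)) by apply: mulr_ge0; lra.
lra.
Qed.

Lemma hr_lem (R : realFieldType) (eps t p q : R) :
  0 <= eps -> eps <= 1/8 -> 0 <= t -> t <= 1 -> 0 <= p -> 0 <= q ->
  eps*((2-t)* p+(1+t)*q)*(t*(1-t)*(p+q)^+2) <= t*(1-t)*(p^+3+q^+3).
Proof.
move=> e0 e1 t0 t1 p0 q0.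
have T0 : 0 <= t*(1-t) by apply: mulr_ge0; lra.
have h43 : (p+q)^+3 <= 4*(p^+3+q^+3).
  rewrite -subr_ge0.
  have -> : 4*(p^+3+q^+3) - (p+q)^+3 = 3*((p+q)*(p-q)^+2) by ring.
  by apply: mulr_ge0 => //; apply: mulr_ge0; [lra|apply: sqr_ge0].
have hM : (2-t)* p+(1+t)*q <= 2*(p+q) by nra.
have r1 : eps*((2-t)* p+(1+t)*q)*(t*(1-t)*(p+q)^+2) <= eps*(2*(p+q))*(t*(1-t)*(p+q)^+2).
  apply: ler_wpM2r; first by apply: mulr_ge0 => //; apply: sqr_ge0.
  by apply: ler_wpM2l.
have r2 : eps*(2*(p+q))*(t*(1-t)*(p+q)^+2) = 2*eps*(t*(1-t))*(p+q)^+3 by ring.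
have r3 : 0 <= 2*eps*(t*(1-t)) by apply: mulr_ge0 => //; apply: mulr_ge0.
have r4 : 2*eps*(t*(1-t))*(p+q)^+3 <= 2*eps*(t*(1-t))*(4*(p^+3+q^+3)) by apply: ler_wpM2l.
have r5 : 0 <= (1 - 8*eps)*(t*(1-t)*(p^+3+q^+3)).
  apply: mulr_ge0; first lra.
  by apply: mulr_ge0 => //; apply: addr_ge0; apply: exprn_ge0.
have r6 : 2*eps*(t*(1-t))*(4*(p^+3+q^+3)) + (1 - 8*eps)*(t*(1-t)*(p^+3+q^+3)) = t*(1-t)*(p^+3+q^+3) by ring.
move: r1 r2 r4 r5 r6; clear; move=> r1 r2 r4 r5 r6.
lra.
Qed.

Lemma case1_lem (R : realFieldType) (t p q nu : R) :
  0 <= t -> t <= 1 -> 0 <= p -> 0 <= q -> 0 <= nu -> nu <= (1-t)* p ->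
  t*(1-t)*(p^+3+q^+3) <= (1-t)* p^+3 + t*q^+3 - nu^+3.
Proof.
move=> t0 t1 p0 q0 n0 h.
have g1 : nu^+3 <= ((1-t)* p)^+3 by apply: lerXn2r => //; rewrite nnegrE; apply: mulr_ge0; lra.
have g2 : 0 <= (t*((1-t)*(1-t)))* p^+3.
  apply: mulr_ge0; [apply: mulr_ge0 => //; apply: mulr_ge0; lra|apply: exprn_ge0 => //].
have g3 : 0 <= (t*t)* q^+3 by apply: mulr_ge0; [apply: mulr_ge0|apply: exprn_ge0].
have g4 : (1-t)* p^+3 + t*q^+3 - ((1-t)* p)^+3 - t*(1-t)*(p^+3+q^+3) = (t*((1-t)*(1-t)))* p^+3 + (t*t)* q^+3 by ring.
move: g1 g2 g3 g4; clear; move=> g1 g2 g3 g4.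
lra.
Qed.

Lemma case2_lem (R : realFieldType) (t p q nu : R) :
  0 <= t -> t <= 1 -> 0 <= p -> 0 <= q -> 0 <= nu -> nu <= t*q ->
  t*(1-t)*(p^+3+q^+3) <= (1-t)* p^+3 + t*q^+3 - nu^+3.
Proof.
move=> t0 t1 p0 q0 n0 h.
have g1 : nu^+3 <= (t* q)^+3 by apply: lerXn2r => //; rewrite nnegrE; apply: mulr_ge0; lra.
have g2 : 0 <= ((1-t)*(1-t))* p^+3.
  apply: mulr_ge0; [apply: mulr_ge0; lra|apply: exprn_ge0 => //].
have g3 : 0 <= (t*(t*(1-t)))* q^+3.
  apply: mulr_ge0; [apply: mulr_ge0 => //; apply: mulr_ge0; lra|apply: exprn_ge0 => //].
have g4 : (1-t)* p^+3 + t*q^+3 - (t* q)^+3 - t*(1-t)*(p^+3+q^+3) = ((1-t)*(1-t))* p^+3 + (t*(t*(1-t)))* q^+3 by ring.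
move: g1 g2 g3 g4; clear; move=> g1 g2 g3 g4.
lra.
Qed.

Lemma sqrt_le_lem (R : realFieldType) (x y : R) : 0 <= x -> 0 <= y -> x^+2 <= y^+2 -> x <= y.
Proof. by move=> x0 y0; rewrite ler_sqr ?nnegrE. Qed.

Lemma keyineq (R : realFieldType) (eps t p q a b s I : R) :
  0 <= eps -> eps <= 1/8 -> 0 <= t -> t <= 1 -> 0 <= p -> 0 <= q -> 0 <= s ->
  a^+2 <= p^+2 -> b^+2 <= q^+2 -> (b-a)^+2 <= p^+2+q^+2-2*I ->
  I <= p*q -> -(p*q) <= I ->
  s^+2 = (1-t)^+2* p^+2 + 2*t*(1-t)*I + t^+2*q^+2 ->
  s^+3 + eps*((1-t)*a+t*b)^+3 <= (1-t)*(p^+3+eps*a^+3) + t*(q^+3+eps*b^+3).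
Proof.
move=> e0 e1 t0 t1 p0 q0 s0 ha hb hab hI1 hI2 hs.
have pa : `|a| <= p by apply: sqrt_le_lem => //; rewrite real_normK ?num_real.
have qb : `|b| <= q by apply: sqrt_le_lem => //; rewrite real_normK ?num_real.
move: pa qb; rewrite !ler_norml => /andP[pa1 pa2] /andP[qb1 qb2].
have T0 : 0 <= t*(1-t) by apply: mulr_ge0; lra.
have M0 : 0 <= (2-t)* p + (1+t)*q by nra.
have cub : (1-t)*a^+3 + t*b^+3 - ((1-t)*a+t*b)^+3 = t*(1-t)*(b-a)^+2*((2-t)*a+(1+t)*b) by ring.
have LM : 0 <= (2-t)*a+(1+t)*b + ((2-t)* p + (1+t)*q) by nra.
have st1 : - (t*(1-t)*(p^+2+q^+2-2*I)*((2-t)* p + (1+t)*q)) <= t*(1-t)*(b-a)^+2*((2-t)*a+(1+t)*b).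
  have h1 : 0 <= t*(1-t)*(b-a)^+2*((2-t)*a+(1+t)*b + ((2-t)* p + (1+t)*q)) by apply: mulr_ge0 => //; apply: mulr_ge0 => //; apply: sqr_ge0.
  have h2 : t*(1-t)*(b-a)^+2*((2-t)* p + (1+t)*q) <= t*(1-t)*(p^+2+q^+2-2*I)*((2-t)* p + (1+t)*q) by apply: ler_wpM2r => //; apply: ler_wpM2l.
  have h3 : t*(1-t)*(b-a)^+2*((2-t)*a+(1+t)*b + ((2-t)* p + (1+t)*q)) = t*(1-t)*(b-a)^+2*((2-t)*a+(1+t)*b) + t*(1-t)*(b-a)^+2*((2-t)* p + (1+t)*q) by ring.
  move: h1 h2 h3; clear; move=> h1 h2 h3; lra.
have wA : t*(1-t)*(p^+2+q^+2-2*I) = ((1-t)* p^+2+t*q^+2) - s^+2 by rewrite hs; ring.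
have mu0 : 0 <= (1-t)* p + t*q by nra.
have nu0 : 0 <= `|(1-t)* p - t*q| by [].
have nu2 : `|(1-t)* p - t*q|^+2 = ((1-t)* p - t* q)^+2 by rewrite real_normK ?num_real.
have smu : s <= (1-t)* p + t*q.
  apply: sqrt_le_lem => //.
  have hh1 : 0 <= t*(1-t)*(p*q - I) by apply: mulr_ge0 => //; lra.
  have hh3 : ((1-t)* p + t*q)^+2 - s^+2 = 2*(t*(1-t)*(p*q - I)) by rewrite hs; ring.
  move: hh1 hh3; clear; move=> hh1 hh3; lra.
have nus : `|(1-t)* p - t*q| <= s.
  apply: sqrt_le_lem => //.
  have hh1 : 0 <= t*(1-t)*(p*q + I) by apply: mulr_ge0 => //; lra.
  have hh3 : s^+2 - `|(1-t)* p - t*q|^+2 = 2*(t*(1-t)*(p*q + I)) by rewrite nu2 hs; ring.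
  move: hh1 hh3; clear; move=> hh1 hh3; lra.
have G : 0 <= ((1-t)* p^+3+t*q^+3 - eps*((2-t)* p + (1+t)*q)*((1-t)* p^+2+t*q^+2)) + (eps*((2-t)* p + (1+t)*q)) * s^+2 - s^+3.
  apply: (@unimod _ (eps*((2-t)* p + (1+t)*q)) s `|(1-t)* p - t*q| ((1-t)* p + t*q)) => //.
  - by apply: mulr_ge0.
  - set nu := `|(1-t)* p - t*q|.
    have -> : (1 - t) * p ^+ 3 + t * q ^+ 3 - eps * ((2 - t) * p + (1 + t) * q) * ((1 - t) * p ^+ 2 + t * q ^+ 2) +
       eps * ((2 - t) * p + (1 + t) * q) * nu ^+ 2 - nu ^+ 3 = 
       ((1 - t) * p ^+ 3 + t * q ^+ 3 - nu^+3) - eps*((2-t)* p+(1+t)*q)*(t*(1-t)*(p+q)^+2).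
      rewrite nu2; ring.
    have hr := @hr_lem _ _ _ _ _ e0 e1 t0 t1 p0 q0.
    have hc : t*(1-t)*(p^+3+q^+3) <= (1-t)* p^+3 + t*q^+3 - nu^+3.
      rewrite /nu; have [h|h] := leP 0 ((1-t)* p - t* q).
        apply: (@case1_lem _ t p q _ t0 t1 p0 q0 (normr_ge0 _)); rewrite ger0_norm // gerBl; apply: mulr_ge0 => //.
      apply: (@case2_lem _ t p q _ t0 t1 p0 q0 (normr_ge0 _)); rewrite ltr0_norm // opprB gerBl; apply: mulr_ge0 => //; lra.
    move: hr hc; clear; move=> hr hc; lra.
  - have -> : (1 - t) * p ^+ 3 + t * q ^+ 3 - eps * ((2 - t) * p + (1 + t) * q) * ((1 - t) * p ^+ 2 + t * q ^+ 2) +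
       eps * ((2 - t) * p + (1 + t) * q) * ((1 - t) * p + t * q) ^+ 2 - ((1 - t) * p + t * q) ^+ 3
       = t*(1-t)*(p-q)^+2*((2-t)* p + (1+t)*q)*(1-eps) by ring.
    apply: mulr_ge0; last lra.
    by apply: mulr_ge0 => //; apply: mulr_ge0 => //; apply: sqr_ge0.
have X1 : eps * (- (t*(1-t)*(p^+2+q^+2-2*I)*((2-t)* p + (1+t)*q))) <= eps * (t*(1-t)*(b-a)^+2*((2-t)*a+(1+t)*b)) by apply: ler_wpM2l.
have X2 : eps * (- (t*(1-t)*(p^+2+q^+2-2*I)*((2-t)* p + (1+t)*q))) = - (eps*((2-t)* p + (1+t)*q)*(((1-t)* p^+2+t*q^+2) - s^+2)) by rewrite wA; ring.
have X3 : (1-t)*(p^+3+eps*a^+3) + t*(q^+3+eps*b^+3) - (s^+3 + eps*((1-t)*a+t*b)^+3) = ((1-t)* p^+3+t*q^+3) - s^+3 + eps*((1-t)*a^+3 + t*b^+3 - ((1-t)*a+t*b)^+3) by ring.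
rewrite -subr_ge0 X3 cub.
move: X1 X2 G; clear; move=> X1 X2 G.
have X4 : ((1-t)* p^+3+t*q^+3 - eps*((2-t)* p + (1+t)*q)*((1-t)* p^+2+t*q^+2)) + (eps*((2-t)* p + (1+t)*q)) * s^+2 - s^+3 = ((1-t)* p^+3+t*q^+3) - s^+3 - (eps*((2-t)* p + (1+t)*q)*(((1-t)* p^+2+t*q^+2) - s^+2)) by ring.
lra.
Qed.


Section Vec.
Context {R : realType} {n : nat}.
Notation V := 'rV[R]_n.
Definition sq (x : V) : R := \sum_(i < n) x 0 i ^+ 2.
Definition dot (x y : V) : R := \sum_(i < n) x 0 i * y 0 i.

Lemma sq_ge0 (x : V) : 0 <= sq x.
Proof. by apply: sumr_ge0 => i _; apply: sqr_ge0. Qed.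
Lemma enorm_ge0 (x : V) : 0 <= enorm x.
Proof. exact: sqrtr_ge0. Qed.
Lemma enorm_sq (x : V) : enorm x ^+ 2 = sq x.
Proof. by rewrite /enorm sqr_sqrtr // sq_ge0. Qed.

Lemma coord_le (x : V) i : x 0 i ^+ 2 <= sq x.
Proof. rewrite /sq (bigD1 i) //= lerDl; apply: sumr_ge0 => k _; exact: sqr_ge0. Qed.

Lemma coord2_le (x : V) i k : i != k -> x 0 i ^+ 2 + x 0 k ^+ 2 <= sq x.
Proof.
move=> ik; rewrite /sq (bigD1 i) //= (bigD1 k) /=; last by rewrite eq_sym.
rewrite addrA lerDl; apply: sumr_ge0 => l _; exact: sqr_ge0.
Qed.

Lemma sq0 (x : V) : sq x = 0 -> x = 0.
Proof.
move=> h; have H := psumr_eq0P (fun i _ => sqr_ge0 (x 0 i)) h.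
apply/matrixP => a b; rewrite mxE (ord1 a).
by have /eqP := H b isT; rewrite sqrf_eq0 => /eqP.
Qed.

Lemma sq_lin a b (x y : V) : sq (a *: x + b *: y) = a^+2 * sq x + 2*a*b * dot x y + b^+2 * sq y.
Proof.
rewrite /sq /dot !mulr_sumr -!big_split /=; apply: eq_bigr => i _; rewrite !mxE; ring.
Qed.

Lemma sq_sub (x y : V) : sq (y - x) = sq x + sq y - 2 * dot x y.
Proof.
have -> : y - x = (-1) *: x + 1 *: y by rewrite scaleN1r scale1r addrC.
rewrite sq_lin; ring.
Qed.

Lemma dot0 (y : V) : dot 0 y = 0.
Proof. by rewrite /dot big1 // => i _; rewrite mxE mul0r. Qed.

Lemma dotC (x y : V) : dot x y = dot y x.
Proof. by apply: eq_bigr => i _; rewrite mulrC. Qed.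

Lemma enorm0_eq {x : V} : enorm x = 0 -> x = 0.
Proof. by move=> h; apply: sq0; rewrite -enorm_sq h expr0n. Qed.

Lemma dot_le (x y : V) : dot x y <= enorm x * enorm y /\ -(enorm x * enorm y) <= dot x y.
Proof.
have p0 := enorm_ge0 x; have q0 := enorm_ge0 y.
have h1 := sq_ge0 (enorm y *: x + (- enorm x) *: y).
have h2 := sq_ge0 (enorm y *: x + enorm x *: y).
rewrite sq_lin -!enorm_sq in h1; rewrite sq_lin -!enorm_sq in h2.
have [pq0|pq0] := eqVneq (enorm x * enorm y) 0.
  move/eqP: pq0; rewrite mulf_eq0 => /orP[] /eqP h.
    have -> : dot x y = 0 by rewrite (enorm0_eq h) dot0.
    by rewrite h mul0r oppr0 lexx.
  have -> : dot x y = 0 by rewrite dotC (enorm0_eq h) dot0.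
  by rewrite h mulr0 oppr0 lexx.
have pqp : 0 < enorm x * enorm y by rewrite lt_neqAle eq_sym pq0 mulr_ge0.
move: h1 h2 pqp; set p := enorm x; set q := enorm y; set I := dot x y.
move=> h1 h2 pqp.
have e1 : q ^+ 2 * p ^+ 2 + 2 * q * - p * I + (- p) ^+ 2 * q ^+ 2 = 2 * (p*q) * (p*q - I) by ring.
have e2 : q ^+ 2 * p ^+ 2 + 2 * q * p * I + p ^+ 2 * q ^+ 2 = 2 * (p*q) * (p*q + I) by ring.
rewrite e1 in h1; rewrite e2 in h2.
have q2 : 0 < 2*(p*q) by rewrite mulr_gt0.
rewrite pmulr_rge0 // in h1; rewrite pmulr_rge0 // in h2.
by split; lra.
Qed.

End Vec.


Section Smooth.
Context {R : realType} (eps : R).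

Definition HH : {poly R} := 1 + eps *: 'X^3.
Lemma HHE u : HH.[u] = 1 + eps * u ^+ 3.
Proof. by rewrite /HH !hornerE. Qed.

Definition FF (P : {poly R}) (r : R) (u : R) : R := P.[u] * powR HH.[u] r.
Definition stepP (Pr : {poly R} * R) : {poly R} * R :=
  (Pr.1^`() * HH + Pr.2 *: (Pr.1 * HH^`()), Pr.2 - 1).

Lemma dFF Pr u : 0 < HH.[u] ->
  is_derive u 1 (FF Pr.1 Pr.2) (FF (stepP Pr).1 (stepP Pr).2 u).
Proof.
move=> Hu; case: Pr => P r /=.
have -> : FF P r = (horner P) * ((@powR R ^~ r) \o horner HH) by apply/funext.
have d1 := is_derive_poly P u.
have d2 : is_derive u 1 ((@powR R ^~ r) \o horner HH) (r * powR HH.[u] (r-1) * HH^`().[u]).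
  exact: is_derive1_comp (is_derive1_powR r Hu) (is_derive_poly HH u).
apply: is_derive_eq (is_deriveM d1 d2) _.
have e : powR HH.[u] r = HH.[u] * powR HH.[u] (r - 1).
  rewrite powRB; last by rewrite implybE (gt_eqF Hu) orbT.
  by rewrite powRr1 ?ltW // mulrC divfK // lt0r_neq0.
rewrite /FF /stepP /= e !hornerE /=.
rewrite /GRing.scale /=; ring.
Qed.

Definition Fk k := iter k stepP (1%:P, -(1/3)).
Definition psi (u : R) : R := powR HH.[u] (-(1/3)).

Lemma psiE : psi = FF 1%:P (-(1/3)).
Proof. by apply/funext => u; rewrite /FF /psi hornerC [in RHS]mul1r. Qed.

Lemma near_pos u : 0 < HH.[u] -> \forall y \near u, 0 < HH.[y].
Proof.
move=> h.
have hc : horner HH x @[x --> u] --> HH.[u] by exact: continuous_horner.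
have := @cvgr_gt R _ _ _ _ _ hc 0 h.
by move=> H; exact: H.
Qed.

Lemma psi_der k : forall u, 0 < HH.[u] -> (derive1n k psi) u = FF (Fk k).1 (Fk k).2 u.
Proof.
elim: k => [|k IH] u hu; first by rewrite derive1n0 psiE.
rewrite derive1nS derive1E (@near_eq_derive _ _ _ ((derive1n k psi)) (FF (Fk k).1 (Fk k).2) u 1).
  by have [_ ->] := dFF (Fk k) u hu; rewrite /Fk iterS.
near=> y; apply: IH; near: y; exact: near_pos hu.
Unshelve. all: by end_near.
Qed.

Lemma psi_derivable k u : 0 < HH.[u] -> derivable (derive1n k psi) u 1.
Proof.
move=> hu; have dF : derivable (FF (Fk k).1 (Fk k).2) u 1 by case: (dFF (Fk k) u hu).
apply: (near_eq_derivable _ dF).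
near=> y; rewrite psi_der //; near: y; exact: near_pos hu.
Unshelve. all: by end_near.
Qed.

End Smooth.


Lemma final_contra (R : realFieldType) (m d e : R) :
  0 <= m -> 0 < d -> 0 < e -> e < 1 -> 1 + d^+2 <= m^+2 -> m^+3 + e*(-d)^+3 <= 1 -> False.
Proof.
move=> m0 d0 e0 e1 hm hF.
have m1 : 1 <= m by rewrite -(@ler_sqr _ 1 m) ?nnegrE // expr1n; nra.
have md : d <= m by rewrite -(@ler_sqr _ d m) ?nnegrE; nra.
have h3 : 1 + d^+3 <= m^+3.
  have e3 : m^+3 = m * m^+2 by ring.
  have : m * (1 + d^+2) <= m * m^+2 by apply: ler_wpM2l.
  have : d * d^+2 <= m * d^+2 by apply: ler_wpM2r => //; apply: sqr_ge0.
  have e4 : d^+3 = d * d^+2 by ring.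
  lra.
have h4 : e * d^+3 < d^+3 by rewrite gtr_pMl // exprn_gt0.
have e5 : (-d)^+3 = - d^+3 by ring.
lra.
Qed.

Section Main.
Context {R : realType} {n : nat}.
Variables (j : 'I_n) (eps : R).
Notation V := 'rV[R]_n.

Definition Fe (x : V) : R := enorm x ^+ 3 + eps * x 0 j ^+ 3.

Lemma powR_cube {F : R} : 0 < F -> (powR F (-(1/3))) ^+ 3 = F^-1.
Proof.
move=> F0; rewrite -powR_mulrn ?powR_ge0 // -powRrM.
have -> : -(1/3) * 3%:R = -1 :> R by field.
by rewrite powR_inv1 // ltW.
Qed.

Lemma enorm0 : enorm (0 : V) = 0.
Proof. by rewrite /enorm big1 ?sqrtr0 // => i _; rewrite mxE expr0n. Qed.

Lemma coord_abs (x : V) k : `|x 0 k| <= enorm x.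
Proof.
apply: sqrt_le_lem => //; first exact: enorm_ge0.
by rewrite real_normK ?num_real // enorm_sq coord_le.
Qed.

Lemma cube_lb {x m : R} : `|x| <= m -> - m^+3 <= x^+3.
Proof.
move=> h; have m0 : 0 <= m := le_trans (normr_ge0 x) h.
move: h; rewrite ler_norml => /andP[h1 h2].
have [x0|x0] := leP 0 x.
  have : 0 <= x^+3 by apply: exprn_ge0.
  have : 0 <= m^+3 by apply: exprn_ge0.
  lra.
have : (-x)^+3 <= m^+3 by apply: lerXn2r; rewrite ?nnegrE; lra.
have e : (-x)^+3 = - x^+3 by ring.
lra.
Qed.

Lemma Fe_pos (x : V) : 0 < eps -> eps < 1 -> x != 0 -> 0 < Fe x.
Proof.
move=> e0 e1 x0.
have m0 : 0 < enorm x.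
  rewrite lt_neqAle enorm_ge0 andbT eq_sym; apply/eqP => h.
  by move/eqP: x0; apply; apply: enorm0_eq.
have h := cube_lb (coord_abs x j).
have : eps * (- enorm x ^+ 3) <= eps * x 0 j ^+ 3 by apply: ler_wpM2l => //; lra.
have : 0 < enorm x ^+ 3 by apply: exprn_gt0.
rewrite /Fe; nra.
Qed.

Lemma inK (x : V) : 0 < eps -> eps < 1 -> K_eps j eps x <-> Fe x <= 1.
Proof.
move=> e0 e1; rewrite /K_eps /body_of_radial /rho_eps /=.
have [->|x0] := eqVneq x 0.
  split => // _; first by rewrite /Fe enorm0 mxE expr0n /= mulr0 addr0 ler01.
  by left.
have F0 := Fe_pos x e0 e1 x0.
have r0 : 0 <= powR (Fe x) (-(1/3)) by apply: powR_ge0.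
have hc := powR_cube F0.
rewrite -/(Fe x).
split.
  case=> [h|h]; first by rewrite h eqxx in x0.
  rewrite -invf_ge1 // -hc.
  by rewrite expr_ge1.
move=> h; right.
by rewrite -(@expr_ge1 _ 3) // hc invf_ge1.
Qed.

End Main.


Section Smooth2.
Context {R : realType} {n : nat}.
Variables (j : 'I_n) (eps : R).
Notation V := 'rV[R]_n.

Lemma D_coord (f : R -> R) (x v : V) :
  'D_v (fun y : V => f (y 0 j)) x = 'D_(v 0 j) f (x 0 j).
Proof.
rewrite /derive.
have -> : (fun h : R => h^-1 *: (((fun y : V => f (y 0 j)) \o shift x) (h *: v) - f (x 0 j))) =
   (fun h : R => h^-1 *: ((f \o shift (x 0 j)) (h *: v 0 j) - f (x 0 j))).
  by apply/funext => h /=; rewrite !mxE.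
by [].
Qed.

Lemma dv_coord (f : R -> R) (x v : V) :
  derivable f (x 0 j) (v 0 j) -> derivable (fun y : V => f (y 0 j)) x v.
Proof.
rewrite /derivable.
have -> : (fun h : R => h^-1 *: (((fun y : V => f (y 0 j)) \o shift x) (h *: v) - f (x 0 j))) =
   (fun h : R => h^-1 *: ((f \o shift (x 0 j)) (h *: v 0 j) - f (x 0 j))).
  by apply/funext => h /=; rewrite !mxE.
by [].
Qed.

Definition psis (s : seq 'I_n) : R -> R :=
  if all (pred1 j) s then derive1n (size s) (psi eps) else (fun _ => 0).

Definition gg (x : V) : R := psi eps (x 0 j).

Lemma iterP s : iter_partial s gg = (fun x => psis s (x 0 j)).
Proof.
elim: s => [|i s IH].
  by apply/funext => x; rewrite /psis /= ?derive1n0.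
rewrite /iter_partial /= -/(iter_partial s gg) IH.
apply/funext => x; rewrite /partial D_coord /evec mxE eqxx /=.
have [ji|ji] := eqVneq j i.
  subst i; rewrite mulr1n -derive1E /psis /= eqxx /=.
  case: (all (pred1 j) s) => /=; first by [].
  exact: derive1_cst.
by rewrite mulr0n derive0 /psis /= eq_sym (negbTE ji).
Qed.

Lemma psis_derivable s u : 0 < (HH eps).[u] -> derivable (psis s) u 1.
Proof.
move=> hu; rewrite /psis; case: (all _ _).
  exact: psi_derivable.
exact: derivable_cst.
Qed.

Lemma psis_cont s u : 0 < (HH eps).[u] -> {for u, continuous (psis s)}.
Proof.
move=> hu; apply: differentiable_continuous; apply/derivable1_diffP.
exact: psis_derivable.
Qed.

Lemma smooth_U : smooth_on [set x : V | 0 < (HH eps).[x 0 j]] gg.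
Proof.
split.
  have -> : [set x : V | 0 < (HH eps).[x 0 j]] = (fun x : V => (HH eps).[x 0 j]) @^-1` [set y : R | 0 < y] by [].
  apply: open_comp; last exact: open_gt.
  move=> x _; apply: (@continuous_comp _ _ _ (fun M : V => M 0 j) (horner (HH eps))).
    exact: coord_continuous.
  exact: continuous_horner.
split.
  move=> s i x hx; rewrite iterP; apply: dv_coord.
  rewrite /evec mxE eqxx /=; case: (j == i) => /=.
    by rewrite mulr1n; exact: psis_derivable.
  by rewrite mulr0n; exact: derivable0.
move=> s x hx; rewrite iterP.
apply: (@continuous_comp _ _ _ (fun M : V => M 0 j) (psis s)).
  exact: coord_continuous.
exact: psis_cont.
Qed.

Lemma smooth_sphere : 0 < eps -> eps < 1 -> smooth_on_sphere (rho_eps j eps).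
Proof.
move=> e0 e1; exists [set x : V | 0 < (HH eps).[x 0 j]], gg; split; last split.
- move=> x; rewrite /sphere /= => hx.
  have h := coord_abs x j; rewrite hx in h.
  have h3 := cube_lb h; rewrite expr1n in h3.
  rewrite HHE.
  have : eps * (-1) <= eps * x 0 j ^+ 3 by apply: ler_wpM2l => //; lra.
  lra.
- exact: smooth_U.
- move=> x; rewrite /sphere /= => hx.
  by rewrite /gg /psi /rho_eps hx expr1n HHE.
Qed.

End Smooth2.


Section Final.
Context {R : realType} {n : nat}.
Variables (j : 'I_n) (eps : R).
Notation V := 'rV[R]_n.

Lemma sevec_coord (c : R) (k l : 'I_n) : (c *: @evec R n k) 0 l = c * (l == k)%:R.
Proof. by rewrite /evec !mxE eqxx. Qed.

Lemma sq_sevec (c : R) (k : 'I_n) : sq (c *: @evec R n k) = c ^+ 2.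
Proof.
rewrite /sq (bigD1 k) //= big1 ?addr0 => [|l lk].
  by rewrite sevec_coord eqxx mulr1.
by rewrite sevec_coord (negbTE lk) mulr0 expr0n.
Qed.

Lemma enorm_sevec (c : R) (k : 'I_n) : enorm (c *: @evec R n k) = `|c|.
Proof. by rewrite /enorm -/(sq _) sq_sevec sqrtr_sqr. Qed.

Lemma Fe_sevec (c : R) (k : 'I_n) :
  Fe j eps (c *: @evec R n k) = `|c| ^+ 3 + eps * (c * (j == k)%:R) ^+ 3.
Proof. by rewrite /Fe enorm_sevec sevec_coord. Qed.

Lemma coordB (t x : V) k : (t + t - x) 0 k = t 0 k + t 0 k - x 0 k.
Proof. by rewrite !mxE. Qed.

Lemma notsym (i : 'I_n) : i != j -> 0 < eps -> eps < 1 ->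
  ~ centrally_symmetric (K_eps j eps).
Proof.
move=> ij e0 e1 [t [X [HX KE]]].
have symK : forall x, K_eps j eps x -> K_eps j eps (t + t - x).
  move=> x; rewrite KE => -[y Xy <-]; exists (-y); first exact: (HX y).1.
  by rewrite opprD addrACA subrr add0r.
have KF : forall x, K_eps j eps x <-> Fe j eps x <= 1 := fun x => inK j eps x e0 e1.
pose a := powR (1 + eps) (-(1/3)); pose b := powR (1 - eps) (-(1/3)).
have a0 : 0 < a by apply: powR_gt0; lra.
have b0 : 0 < b by apply: powR_gt0; lra.
have a3 : a ^+ 3 = (1 + eps)^-1 by apply: powR_cube; lra.
have b3 : b ^+ 3 = (1 - eps)^-1 by apply: powR_cube; lra.
have a3' : a ^+ 3 * (1 + eps) = 1 by rewrite a3 mulVf //; apply: lt0r_neq0; lra.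
have b3' : b ^+ 3 * (1 - eps) = 1 by rewrite b3 mulVf //; apply: lt0r_neq0; lra.
have Ka : K_eps j eps (a *: @evec R n j).
  apply/KF; rewrite Fe_sevec eqxx mulr1 ger0_norm; last exact: ltW.
  rewrite -a3'; lra.
have Kb : K_eps j eps ((-b) *: @evec R n j).
  apply/KF; rewrite Fe_sevec eqxx mulr1 ler0_norm; last by rewrite oppr_le0 ltW.
  have e : (- - b) ^+ 3 + eps * (- b) ^+ 3 = b ^+ 3 * (1 - eps) by ring.
  by rewrite e b3'.
have Ki : forall c : R, `|c| = 1 -> K_eps j eps (c *: @evec R n i).
  move=> c hc; apply/KF; rewrite Fe_sevec eq_sym (negbTE ij) mulr0 expr0n mulr0 addr0 hc expr1n.
  exact: lexx.
have ub : forall x : V, K_eps j eps x -> x 0 j <= a.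
  move=> x /KF hx; rewrite leNgt; apply/negP => hax.
  have xj0 : 0 < x 0 j by apply: lt_trans hax.
  have hm := coord_abs x j; rewrite ger0_norm in hm; last exact: ltW.
  have h1 : x 0 j ^+ 3 <= enorm x ^+ 3 by apply: lerXn2r; rewrite ?nnegrE ?enorm_ge0 ?(ltW xj0).
  have h2 : a ^+ 3 < x 0 j ^+ 3 by rewrite ltrXn2r // ltW.
  have h3 : a ^+ 3 * (1 + eps) < x 0 j ^+ 3 * (1 + eps) by rewrite ltr_pM2r //; lra.
  have h4 : eps * x 0 j ^+ 3 = x 0 j ^+ 3 * eps by rewrite mulrC.
  move: hx; rewrite /Fe; lra.
have lb : forall x : V, K_eps j eps x -> - b <= x 0 j.
  move=> x /KF hx; rewrite leNgt; apply/negP => hbx.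
  have yj0 : b < - x 0 j by lra.
  have hm := coord_abs x j; rewrite ler0_norm in hm; last lra.
  have h1 : (- x 0 j) ^+ 3 <= enorm x ^+ 3 by apply: lerXn2r => //; rewrite nnegrE; lra.
  have h2 : b ^+ 3 < (- x 0 j) ^+ 3 by rewrite ltrXn2r // ltW.
  have h3 : b ^+ 3 * (1 - eps) < (- x 0 j) ^+ 3 * (1 - eps) by rewrite ltr_pM2r //; lra.
  have h4 : eps * x 0 j ^+ 3 = - ((- x 0 j) ^+ 3 * eps) by ring.
  have h5 : eps * (- x 0 j) ^+ 3 <= eps * enorm x ^+ 3 by apply: ler_wpM2l => //; lra.
  have h6 : (- x 0 j) ^+ 3 * (1 - eps) = (- x 0 j) ^+ 3 - (- x 0 j) ^+ 3 * eps by ring.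
  have h7 : (- x 0 j) ^+ 3 * eps <= enorm x ^+ 3 * eps by apply: ler_wpM2r => //; lra.
  have h8 : enorm x ^+ 3 * (1 - eps) = enorm x ^+ 3 - enorm x ^+ 3 * eps by ring.
  have h9 : (- x 0 j) ^+ 3 * (1 - eps) <= enorm x ^+ 3 * (1 - eps) by apply: ler_wpM2r => //; lra.
  move: hx; rewrite /Fe; lra.
have t1 := lb _ (symK _ Ka); rewrite coordB sevec_coord eqxx mulr1 in t1.
have t2 := ub _ (symK _ Kb); rewrite coordB sevec_coord eqxx mulr1 in t2.
have tj : t 0 j + t 0 j = a - b by lra.
have dpos : a < b.
  rewrite ltNge; apply/negP => hba.
  have : b ^+ 3 <= a ^+ 3 by apply: lerXn2r => //; rewrite nnegrE ltW.
  rewrite a3 b3 lef_pV2 ?posrE; lra.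
have [ti|ti] := leP 0 (t 0 i).
  have Ky := symK _ (Ki (-1) (normrN1 _)).
  have Fy := (KF _).1 Ky.
  have hc := coord2_le (t + t - (-1) *: @evec R n i) i j ij.
  rewrite !coordB !sevec_coord eqxx (eq_sym j i) (negbTE ij) mulr0 mulr1 subr0 tj in hc.
  rewrite -enorm_sq in hc.
  apply: (@final_contra _ (enorm (t + t - (-1) *: @evec R n i)) (b - a) eps) => //.
  - exact: enorm_ge0.
  - lra.
  - have : 1 <= (t 0 i + t 0 i - -1) ^+ 2.
      have hh : 1 <= t 0 i + t 0 i - -1 by lra.
      by rewrite expr_ge1 //; lra.
    have e : (a - b) ^+ 2 = (b - a) ^+ 2 by ring.
    lra.
  - move: Fy; rewrite /Fe coordB sevec_coord (eq_sym j i) (negbTE ij) mulr0 subr0 tj.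
    have e : (a - b) = - (b - a) by ring.
    by rewrite e.
have Ky := symK _ (Ki 1 (normr1 _)).
have Fy := (KF _).1 Ky.
have hc := coord2_le (t + t - 1 *: @evec R n i) i j ij.
rewrite !coordB !sevec_coord eqxx (eq_sym j i) (negbTE ij) mulr0 mulr1 subr0 tj in hc.
rewrite -enorm_sq in hc.
apply: (@final_contra _ (enorm (t + t - 1 *: @evec R n i)) (b - a) eps) => //.
- exact: enorm_ge0.
- lra.
- have : 1 <= (t 0 i + t 0 i - 1) ^+ 2.
    have hh : 1 <= - (t 0 i + t 0 i - 1) by lra.
    have e : (t 0 i + t 0 i - 1) ^+ 2 = (- (t 0 i + t 0 i - 1)) ^+ 2 by ring.
    by rewrite e expr_ge1 //; lra.
  have e : (a - b) ^+ 2 = (b - a) ^+ 2 by ring.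
  lra.
- move: Fy; rewrite /Fe coordB sevec_coord (eq_sym j i) (negbTE ij) mulr0 subr0 tj.
  have e : (a - b) = - (b - a) by ring.
  by rewrite e.
Qed.

Lemma conv_K : 0 < eps -> eps <= 1/8 -> convex (K_eps j eps).
Proof.
move=> e0 e8 x y t Kx Ky t0 t1.
have e1 : eps < 1 by lra.
move/(inK j eps x e0 e1): Kx => Kx; move/(inK j eps y e0 e1): Ky => Ky.
apply/(inK j eps _ e0 e1).
set z := (1 - t) *: x + t *: y.
have ha : x 0 j ^+ 2 <= enorm x ^+ 2 by rewrite enorm_sq; exact: coord_le.
have hb : y 0 j ^+ 2 <= enorm y ^+ 2 by rewrite enorm_sq; exact: coord_le.
have hab : (y 0 j - x 0 j) ^+ 2 <= enorm x ^+ 2 + enorm y ^+ 2 - 2 * dot x y.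
  have := coord_le (y - x) j; rewrite sq_sub !enorm_sq !mxE.
  by [].
have [hI1 hI2] := dot_le x y.
have hs : enorm z ^+ 2 = (1 - t) ^+ 2 * enorm x ^+ 2 + 2 * t * (1 - t) * dot x y + t ^+ 2 * enorm y ^+ 2.
  by rewrite enorm_sq /z sq_lin -!enorm_sq; ring.
have key := @keyineq _ eps t (enorm x) (enorm y) (x 0 j) (y 0 j) (enorm z) (dot x y)
  (ltW e0) e8 t0 t1 (enorm_ge0 x) (enorm_ge0 y) (enorm_ge0 z) ha hb hab hI1 hI2 hs.
have zj : z 0 j = (1 - t) * x 0 j + t * y 0 j by rewrite /z !mxE.
rewrite /Fe zj.
rewrite /Fe in Kx Ky.
have k1 : (1 - t) * (enorm x ^+ 3 + eps * x 0 j ^+ 3) <= (1 - t) * 1 by apply: ler_wpM2l => //; lra.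
have k2 : t * (enorm y ^+ 3 + eps * y 0 j ^+ 3) <= t * 1 by apply: ler_wpM2l.
lra.
Qed.

End Final.

Theorem lemma3p2 (R : realType) (n : nat) (hn : (2 <= n)%N)
    (j : 'I_n) (hj : nat_of_ord j = n.-1) :
  (forall eps : R, 0 < eps -> eps < 1 ->
      smooth_on_sphere (rho_eps j eps) /\
      ~ centrally_symmetric (K_eps j eps)) /\
  (exists eps0 : R, 0 < eps0 /\ eps0 <= 1 /\
      forall eps : R, 0 < eps -> eps < eps0 -> convex (K_eps j eps)).
Proof.
split.
  move=> eps e0 e1; split; first exact: smooth_sphere.
  have n0 : (0 < n)%N by apply: leq_trans hn.
  pose i := Ordinal n0.
  have ij : i != j.
    apply/eqP => h; have := congr1 val h; rewrite /= hj.
    by case: n hn j hj n0 i h => [|[|n']].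
  exact: (notsym j eps i ij e0 e1).
exists (1/8); split; first lra.
split; first lra.
move=> eps e0 e8; apply: conv_K => //; lra.
Qed.
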